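(* Let $\lambda\in\mathbb{R}$, let $r,k\ge1$ be integers and let $z\in\mathbb{C}$. Then \[ \phi_{k,\lambda}^{(r,r)}(|z|^2)=e^{-|z|^2}\sum_{n=1}^{\infty}\frac{(|z|^2)^n}{n!}\big((n)_r\big)_{k,\lambda}. \] In particular, when $|z|=1$, \[ \phi_{k,\lambda}^{(r,r)}=\frac{1}{e}\sum_{n=1}^{\infty}\frac{1}{n!}\big((n)_r\big)_{k,\lambda}. \]
   Context: Notation: $(x)_0=1$, $(x)_m=x(x-1)\cdots(x-m+1)$; $(y)_{0,\lambda}=1$, $(y)_{k,\lambda}=y(y-\lambda)\cdots(y-(k-1)\lambda)$. Let $D=\frac{d}{dx}$ and let $x$ also denote multiplication by $x$. The numbers $S_\lambda^{(r,r)}(k,j)$, $0\le j\le kr$, are defined by the operator identity $\prod_{i=0}^{k-1}\big(x^{r}D^{r}-i\lambda\big)=\sum_{j=0}^{kr}S_\lambda^{(r,r)}(k,j)\,x^{j}D^{j}$ (equivalently, the boson normal ordering $\prod_{i=0}^{k-1}\big((a^{\dagger})^{r}a^{r}-i\lambda\big)=\sum_{j=0}^{kr}S_\lambda^{(r,r)}(k,j)(a^{\dagger})^{j}a^{j}$ with $[a,a^{\dagger}]=1$), and $\phi_{k,\lambda}^{(r,r)}(x)=\sum_{j=0}^{kr}S_\lambda^{(r,r)}(k,j)x^j$, $\phi_{k,\lambda}^{(r,r)}=\phi_{k,\lambda}^{(r,r)}(1)$. *)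

(* Defs.v *)
From Stdlib Require Import Reals.
From Coquelicot Require Import Coquelicot.
From HB Require Import structures.
From mathcomp Require Import all_boot all_order all_algebra.
From mathcomp Require Import Rstruct.
Set Implicit Arguments. Unset Strict Implicit. Unset Printing Implicit Defensive.
Import GRing.Theory.

Local Open Scope ring_scope.

Definition ffact (x : R) (m : nat) : R := \prod_(i < m) (x - i%:R).

Definition gfact (y : R) (k : nat) (lam : R) : R :=
  \prod_(i < k) (y - i%:R * lam).

Definition xD (j : nat) (p : {poly R}) : {poly R} := 'X^j * p^`(j).

(* the operator prod_{i=0}^{k-1} (x^r D^r - i lam) acting on polynomials
   (the factors are polynomials in x^r D^r, hence commute) *)
Fixpoint opprod (lam : R) (r k : nat) (p : {poly R}) : {poly R} :=
  match k with
  | 0 => p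
  | k'.+1 => let q := opprod lam r k' p in xD r q - (k'%:R * lam) *: q
  end.

(* S : nat -> R are the numbers S_lam^{(r,r)}(k,j), 0 <= j <= k r, i.e.
   they satisfy the operator identity
   prod_{i=0}^{k-1} (x^r D^r - i lam) = sum_{j=0}^{kr} S j x^j D^j
   (as operators on polynomials). *)
Definition is_Srr (lam : R) (r k : nat) (S : nat -> R) : Prop :=
  forall p : {poly R},
    opprod lam r k p = \sum_(j < (k * r).+1) S j *: xD j p.

Definition phi (r k : nat) (S : nat -> R) (x : R) : R :=
  \sum_(j < (k * r).+1) S j * x ^+ j.

Definition term (lam : R) (r k : nat) (t : R) (n : nat) : R :=
  t ^+ n / (n`!)%:R * gfact (ffact n%:R r) k lam.

(* Main.v *)
Require Import Defs.
From Stdlib Require Import Reals.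
From Coquelicot Require Import Coquelicot.
From HB Require structures.
From mathcomp Require all_boot all_order all_algebra Rstruct ring.

Module Helpers.
Import structures.
Import all_boot all_order all_algebra Rstruct ring.
Import GRing.Theory Num.Theory.
Local Open Scope ring_scope.
Lemma ffact_nat (n j : nat) : ffact n%:R j = (n ^_ j)%:R.
Proof.
elim: j => [|j IH]; first by rewrite /ffact big_ord0.
rewrite /ffact big_ord_recr /= -/(ffact _ j) IH ffactnSr natrM.
case: (leqP j n) => hj; first by rewrite natrB.
by rewrite ffact_small // !mul0r.
Qed.

Lemma xD_Xn (j n : nat) : xD j 'X^n = (ffact n%:R j) *: 'X^n.
Proof.
rewrite /xD derivnXn ffact_nat.
case: (leqP j n) => hj.
  by rewrite mulrnAr -exprD subnKC // scaler_nat.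
by rewrite ffact_small // mulr0n mulr0 scale0r.
Qed.

Lemma opprod_Xn lam r k n :
  opprod lam r k 'X^n = gfact (ffact n%:R r) k lam *: 'X^n.
Proof.
elim: k => [|k IH] /=; first by rewrite /gfact big_ord0 scale1r.
rewrite IH /xD derivnZ -scalerAr -/(xD r _) xD_Xn scalerA scalerA -scalerBl.
congr (_ *: _).
rewrite /gfact big_ord_recr /= mulrBr; congr (_ - _); exact: mulrC.
Qed.

Lemma key lam r k S n : is_Srr lam r k S ->
  gfact (ffact n%:R r) k lam = \sum_(j < (k * r).+1) S j * ffact n%:R j.
Proof.
move=> H; have := congr1 (fun p : {poly R} => p`_n) (H 'X^n).
rewrite opprod_Xn coefZ coefXn eqxx mulr1 => ->.
rewrite coef_sum; apply: eq_bigr => j _.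
by rewrite xD_Xn !coefZ coefXn eqxx mulr1.
Qed.
Notation ser := (@is_series R_AbsRing R_NormedModule).

Lemma exp_series (t : R) : ser (fun m => t ^+ m / (m`!)%:R) (exp t).
Proof.
have := is_exp_Reals t; rewrite /is_pseries.
apply: is_series_ext => m.
by rewrite pow_n_pow /scal /= /mult /= -!RealsE.
Qed.

Lemma ser_scal (c : R) a l : ser a l -> ser (fun n => c * a n) (c * l).
Proof. exact: is_series_scal. Qed.

Lemma ser_plus a b la lb : ser a la -> ser b lb -> ser (fun n => a n + b n) (la + lb).
Proof. exact: is_series_plus. Qed.

Lemma ser_shift j a l : (forall n, (n < j)%N -> a n = 0) ->
  ser (fun m => a (j + m)%N) l -> ser a l.
Proof.
case: j => [|j] Ha H.
  by apply: is_series_ext H => m.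
apply: (is_series_decr_n a j.+1) => //; first by apply/ltP.
have -> : sum_n a j = 0.
  have : forall i, (i <= j)%N -> sum_n a i = 0.
    elim=> [|i IH] hi; first by rewrite sum_O Ha.
    rewrite sum_Sn IH ?Ha; last by apply: ltnW.
      by rewrite /plus /= Rplus_0_r.
    by [].
  by apply.
set L := plus _ _.
have -> : L = l by rewrite /L opp_zero plus_zero_r.
exact: H.
Qed.

Lemma ser_ff (t : R) j :
  ser (fun n => t ^+ n / (n`!)%:R * ffact n%:R j) (t ^+ j * exp t).
Proof.
apply: (ser_shift j).
  by move=> n hn; rewrite ffact_nat ffact_small // mulr0.
have := ser_scal (t ^+ j) _ _ (exp_series t); apply: is_series_ext => m.
rewrite ffact_nat exprD -(ffact_fact (leq_addr m j)) addKn natrM.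
have h1 : ((j + m) ^_ j)%:R != 0 :> R by rewrite pnatr_eq0 -lt0n ffact_gt0 leq_addr.
have h2 : (m`!)%:R != 0 :> R by rewrite pnatr_eq0 -lt0n fact_gt0.
by field; rewrite h1 h2.
Qed.

Lemma ser_eq a l l' : l = l' -> ser a l -> ser a l'.
Proof. by move->. Qed.
Arguments ser_eq {a l l'}.

Lemma ser_sum N (F : nat -> nat -> R) (L : nat -> R) :
  (forall j, ser (F j) (L j)) ->
  ser (fun n => \sum_(j < N) F j n) (\sum_(j < N) L j).
Proof.
move=> HF; elim: N => [|N IH].
  have := ser_scal 0 _ _ (exp_series 0).
  rewrite big_ord0 mul0r; apply: is_series_ext => n.
  by rewrite big_ord0 mul0r.
rewrite big_ord_recr /=.
have := ser_plus _ _ _ _ IH (HF N); apply: is_series_ext => n.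
by rewrite big_ord_recr.
Qed.

Lemma main_t lam r k S (t : R) : (1 <= r)%N -> (1 <= k)%N -> is_Srr lam r k S ->
  ser (fun m => term lam r k t (Nat.add m 1)) (phi r k S t * exp t).
Proof.
move=> hr hk HS.
have A : ser (fun n => t ^+ n / (n`!)%:R * gfact (ffact n%:R r) k lam)
             (phi r k S t * exp t).
  have -> : phi r k S t * exp t = \sum_(j < (k * r).+1) S j * (t ^+ j * exp t).
    by rewrite /phi mulr_suml; apply: eq_bigr => j _; rewrite mulrA.
  have := ser_sum (k * r).+1
    (fun j n => S j * (t ^+ n / (n`!)%:R * ffact n%:R j))
    (fun j => S j * (t ^+ j * exp t))
    (fun j => ser_scal _ _ _ (ser_ff t j)).
  apply: is_series_ext => n.
  by rewrite (key _ _ _ _ _ HS) mulr_sumr; apply: eq_bigr => j _; rewrite mulrCA.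
have A0 : gfact (ffact 0%:R r) k lam = 0.
  rewrite ffact_nat ffact_small //.
  case: k hk {A HS} => // k _.
  by rewrite /gfact big_ord_recl /= mul0r subr0 mul0r.
have B : ser (fun n => t ^+ n / (n`!)%:R * gfact (ffact n%:R r) k lam)
             (plus (phi r k S t * exp t) (t ^+ 0 / (0`!)%:R * gfact (ffact 0%:R r) k lam)).
  by rewrite A0 mulr0 plus_zero_r.
have := is_series_incr_1 _ _ B; apply: is_series_ext => m.
by rewrite /term -[Nat.add m 1]/(addn m 1) addn1.
Qed.

Lemma exp_cancel (p t : R) : Rmult (exp (Ropp t)) (Rmult p (exp t)) = p.
Proof.
rewrite exp_Ropp Rmult_comm Rmult_assoc Rinv_r ?Rmult_1_r //.
apply: Rgt_not_eq; exact: exp_pos.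
Qed.
Lemma final lam r k Srr : (1 <= r)%N -> (1 <= k)%N -> is_Srr lam r k Srr ->
  forall t : R, ex_series (fun m => term lam r k t (Nat.add m 1)) /\
   phi r k Srr t = Rmult (exp (Ropp t)) (Series (fun m => term lam r k t (Nat.add m 1))).
Proof.
move=> hr hk HS t; have H := main_t lam r k Srr t hr hk HS.
split; first by exists (GRing.mul (phi r k Srr t) (exp t)).
by rewrite (is_series_unique _ _ H) exp_cancel.
Qed.
End Helpers.

(* Srr j = S_lam^{(r,r)}(k,j).  Series are indexed from n = 1:
   the Coquelicot series at index m is the term with n = m + 1. *)
Theorem theorem10 (lam : R) (r k : nat) (z : C) (Srr : nat -> R) :
  (1 <= r)%nat -> (1 <= k)%nat -> is_Srr lam r k Srr ->
  (ex_series (fun m => term lam r k (Cmod z ^ 2) (m + 1)) /\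
   phi r k Srr (Cmod z ^ 2) =
     (exp (- (Cmod z ^ 2)) * Series (fun m => term lam r k (Cmod z ^ 2) (m + 1)))%R)
  /\
  (ex_series (fun m => term lam r k 1 (m + 1)) /\
   phi r k Srr 1 = (/ exp 1 * Series (fun m => term lam r k 1 (m + 1)))%R).
Proof.
intros hr hk HS.
pose proof (G := Helpers.final lam r k Srr (ssrbool.introT ssrnat.leP hr) (ssrbool.introT ssrnat.leP hk) HS).
split; [exact (G _) |].
destruct (G 1%R) as [G1 G2].
split; [exact G1 |].
rewrite G2, exp_Ropp. reflexivity.
Qed.
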